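(* Let $q$ be a prime and $k\geq 2$, and let $f$ be a linear Latin hypercube of order $q$ and dimension $k$. Then there is a unique function $R:\mathbb{F}_q^3\to\mathbb{F}_q$ such that for every rectangle $(a,b,c,d)$ (of any two distinct directions) one has $f(a)=R(f(b),f(c),f(d))$.
   Context: A Latin hypercube of order $q$ and dimension $k$ is a function $f:\mathbb{F}_q^k\to\mathbb{F}_q$ such that fixing any $k-1$ arguments gives a bijection in the remaining argument. It is linear if there are permutations $\alpha_0,\alpha_1,\dots,\alpha_k$ of $\mathbb{F}_q$ with $\alpha_0(f(x_1,\dots,x_k))=\alpha_1(x_1)+\cdots+\alpha_k(x_k)$ for all $x$. For distinct $i,j\in\{1,\dots,k\}$, a rectangle of directions $i$ and $j$ is a quadruple $(a,b,c,d)$ of elements of $\mathbb{F}_q^k$ with $a_i=b_i$, $c_i=d_i$, $b_j=c_j$, $d_j=a_j$, and $a_l=b_l=c_l=d_l$ for all $l\notin\{i,j\}$. *)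

(* Defs.v *)
From HB Require Import structures.
From mathcomp Require Import all_boot all_order all_algebra all_fingroup.
Set Implicit Arguments. Unset Strict Implicit. Unset Printing Implicit Defensive.
Import GRing.Theory.
Local Open Scope ring_scope.

Definition point (q k : nat) := {ffun 'I_k -> 'F_q}.

Definition upd (q k : nat) (x : point q k) (i : 'I_k) (y : 'F_q) : point q k :=
  [ffun l => if l == i then y else x l].

Definition latin_hypercube (q k : nat) (f : point q k -> 'F_q) : Prop :=
  forall (i : 'I_k) (x : point q k), bijective (fun y : 'F_q => f (upd x i y)).

Definition linear_lh (q k : nat) (f : point q k -> 'F_q) : Prop :=
  exists (alpha0 : {perm 'F_q}) (alpha : 'I_k -> {perm 'F_q}),
    forall x : point q k, alpha0 (f x) = \sum_(i < k) alpha i (x i).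

Definition rectangle (q k : nat) (i j : 'I_k) (a b c d : point q k) : Prop :=
  [/\ i != j, a i = b i, c i = d i, b j = c j & d j = a j] /\
  forall l : 'I_k, l != i -> l != j -> [/\ a l = b l, b l = c l & c l = d l].

(* Main.v *)
Require Import Defs.
From mathcomp Require Import all_boot all_order all_algebra all_fingroup.
From Stdlib Require Import FunctionalExtensionality.
From mathcomp Require Import ring.
Import GRing.Theory.

Lemma exist_part (q k : nat) (f : point q k -> 'F_q) (a0 : {perm 'F_q})
  (al : 'I_k -> {perm 'F_q})
  (Hl : forall x : point q k, a0 (f x) = (\sum_(i < k) al i (x i))%R) :
  forall (i j : 'I_k) (a b c d : point q k),
      rectangle i j a b c d ->
      f a = (fun u v w => ((a0^-1)%g (a0 u - a0 v + a0 w))%R) (f b) (f c) (f d).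
Proof.
  move=> i j a b c d [[nij ai ci bj dj] oth] /=.
  apply: (@perm_inj _ a0); rewrite permKV !Hl.
  have H : (\sum_(l < k) (al l (a l) - al l (b l) + al l (c l) - al l (d l)) = 0)%R.
    apply: big1 => l _.
    case: (eqVneq l i) => [->|li]; first by rewrite ai ci subrr add0r subrr.
    case: (eqVneq l j) => [->|lj]; first by rewrite bj dj addrNK subrr.
    have [-> -> ->] := oth l li lj. by rewrite subrr add0r subrr.
  rewrite !sumrB big_split /= sumrB in H.
  apply/eqP; rewrite -subr_eq0; apply/eqP; rewrite -[RHS]H.
  ring.
Qed.

Theorem lemma1 (q k : nat) (hq : prime q) (hk : (2 <= k)%N)
  (f : point q k -> 'F_q) (hlat : latin_hypercube f) (hlin : linear_lh f) :
  exists! R : 'F_q -> 'F_q -> 'F_q -> 'F_q,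
    forall (i j : 'I_k) (a b c d : point q k),
      rectangle i j a b c d -> f a = R (f b) (f c) (f d).
Proof.
have [a0 [al Hl]] := hlin.
have Hex := @exist_part q k f a0 al Hl.
exists (fun u v w => ((a0^-1)%g (a0 u - a0 v + a0 w))%R); split; first exact: Hex.
move=> R' HR.
apply: functional_extensionality => u.
apply: functional_extensionality => v.
apply: functional_extensionality => w.
have k0 : (0 < k)%N by apply: leq_trans hk.
pose i : 'I_k := Ordinal k0.
pose j : 'I_k := Ordinal hk.
have nij : i != j by [].
pose z : point q k := [ffun => 0%R].
have [gi gi1 gi2] := hlat i z.
pose c := upd z i (gi v).
have fc : f c = v by rewrite /c gi2.
have [hi hi1 hi2] := hlat i c.
pose b := upd c i (hi u).
have fb : f b = u by rewrite /b hi2.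
have [hj hj1 hj2] := hlat j c.
pose d := upd c j (hj w).
have fd : f d = w by rewrite /d hj2.
pose a := upd b j (hj w).
have rect : rectangle i j a b c d.
  split.
    split => //; rewrite /a /b /d /upd !ffunE ?eqxx //.
  move=> l li lj; rewrite /a /b /d /upd !ffunE (negbTE li) (negbTE lj) //.
have := HR i j a b c d rect.
rewrite fb fc fd => <-.
by rewrite (Hex i j a b c d rect) fb fc fd.
Qed.
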